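(* For a positive integer $g$, let $t_g$ denote the number of numerical semigroups $\Lambda$ of genus $g$ satisfying $f(\Lambda)<3m(\Lambda)$. Then for every positive integer $g$, \[ t_g \geq F_{g+1} + \sum_{k = 1}^{\lfloor g/3\rfloor} \sum_{A \in \mathcal A_k} F_{g - |(A + A)\cap[0, k]| + |A| - k - 1}. \]
   Context: A numerical semigroup is a subset $\Lambda\subseteq\mathbb{N}_0$ closed under addition, containing $0$, with finite complement in $\mathbb{N}_0$. Its genus is $|\mathbb{N}_0\setminus\Lambda|$, its multiplicity $m(\Lambda)$ is its smallest nonzero element and its Frobenius number $f(\Lambda)$ is the largest element of $\mathbb{N}_0\setminus\Lambda$. For integers $a\le b$, $[a,b]=\{a,\dots,b\}$; $A+A=\{a_1+a_2:a_1,a_2\in A\}$. For a positive integer $k$, $\mathcal A_k = \{A \subseteq [0, k-1] : 0 \in A \text{ and } k \notin A + A\}$. $F_n$ are the Fibonacci numbers, $F_1=F_2=1$, $F_{n+2}=F_{n+1}+F_n$, with the convention $F_n=0$ for all $n\le 0$. *)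

(* Defs.v *)
From mathcomp Require Import all_boot all_order all_algebra.
Set Implicit Arguments. Unset Strict Implicit. Unset Printing Implicit Defensive.

Definition is_numsg (L : pred nat) : Prop :=
  [/\ L 0, (forall a b, L a -> L b -> L (a + b)) & (exists N, forall n, N <= n -> L n)].

Definition has_genus (L : pred nat) (g : nat) : Prop :=
  exists N, (forall n, N <= n -> L n) /\ count (fun n => ~~ L n) (iota 0 N) = g.

Definition is_multiplicity (L : pred nat) (m : nat) : Prop :=
  [/\ 0 < m, L m & forall n, 0 < n < m -> ~~ L n].

Definition is_frobenius (L : pred nat) (f : nat) : Prop :=
  ~~ L f /\ forall n, f < n -> L n.

Definition counted_sg (g : nat) (L : pred nat) : Prop :=
  is_numsg L /\ has_genus L g /\
  exists f m, [/\ is_frobenius L f, is_multiplicity L m & f < 3 * m].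

Fixpoint fib (n : nat) : nat :=
  match n with
  | 0 => 0
  | 1 => 1
  | (n'.+1 as p).+1 => fib p + fib n'
  end.

(* F_n for integer n, with F_n = 0 for n <= 0 *)
Definition fibz (z : int) : nat :=
  match z with
  | Posz n => fib n
  | Negz _ => 0
  end.

Definition in_sumset (k : nat) (A : {set 'I_k}) (n : nat) : bool :=
  [exists a in A, exists b in A, (val a + val b == n)].

Definition in_Ak (k : nat) (A : {set 'I_k}) : bool :=
  [exists i in A, val i == 0] && ~~ in_sumset A k.

Definition sumset_card_upto (k : nat) (A : {set 'I_k}) : nat :=
  count (in_sumset A) (iota 0 k.+1).

Definition rhs (g : nat) : nat :=
  fib g.+1 +
  \sum_(1 <= k < (g %/ 3).+1)
     \sum_(A : {set 'I_k} | in_Ak A)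
        fibz (g%:Z - (sumset_card_upto A)%:Z + #|A|%:Z - k%:Z - 1)%R.
Example fib_test : [:: fib 0; fib 1; fib 2; fib 3; fib 4; fib 5] = [:: 0;1;1;2;3;5]. Proof. by []. Qed.
Example fibz_neg : fibz (-3)%R = 0. Proof. by []. Qed.

(* Main.v *)
Require Import Defs.
From mathcomp Require Import all_boot all_order all_algebra zify.
From Stdlib Require Import Classical.
Set Implicit Arguments. Unset Strict Implicit. Unset Printing Implicit Defensive.

Definition mk (m : nat) (U V : seq bool) : seq bool :=
  true :: nseq m.-1 false ++ U ++ V.

Lemma size_mk m U V : 0 < m -> size U = m -> size V = m -> size (mk m U V) = 3 * m.
Proof. move=> m0 hU hV; rewrite /= size_cat size_nseq size_cat hU hV; lia. Qed.

Lemma nth_mk m U V n : 0 < m -> size U = m -> size V = m ->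
  nth true (mk m U V) n =
  if n == 0 then true else if n < m then false else if n < 2 * m then nth false U (n - m)
  else if n < 3 * m then nth false V (n - 2 * m) else true.
Proof.
move=> m0 hU hV; case: n => [|n] //=.
rewrite nth_cat size_nseq.
case: ifP => h1.
  rewrite nth_nseq h1; have -> : n.+1 < m by lia. done.
have -> : (n.+1 < m) = false by lia.
rewrite nth_cat hU; case: ifP => h2.
  have -> : n.+1 < 2 * m by lia.
  rewrite (set_nth_default false); last by lia.
  congr nth; lia.
have -> : (n.+1 < 2 * m) = false by lia.
case: ifP => h3.
  rewrite (set_nth_default false); last by lia.
  congr nth; lia.
by rewrite nth_default //; lia.
Qed.

Lemma count_nth_iota (s : seq bool) :
  count (fun n => ~~ nth true s n) (iota 0 (size s)) = count negb s.
Proof.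
by rewrite -{3}(mkseq_nth true s) /mkseq count_map.
Qed.

Lemma counted_of g m U V : 1 < m -> size U = m -> size V = m ->
  nth false U 0 ->
  (forall i j, i + j < m -> nth false U i -> nth false U j -> nth false V (i + j)) ->
  m.-1 + count negb U + count negb V = g -> 0 < g ->
  counted_sg g (nth true (mk m U V)).
Proof.
move=> m1 hU hV U0 cl hgen g0.
have m0 : 0 < m by lia.
have E := nth_mk _ m0 hU hV.
have cof : forall n, 3 * m <= n -> nth true (mk m U V) n.
  move=> n hn; rewrite E; case: ifP => // ?; case: ifP => ?; first lia.
  case: ifP => ?; first lia. case: ifP => // ?; lia.
have hgenus : count (fun n => ~~ nth true (mk m U V) n) (iota 0 (3 * m)) = g.
  rewrite -(size_mk m0 hU hV) count_nth_iota /mk /= count_cat count_nseq /= count_cat.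
  rewrite -hgen; lia.
split; [split|split].
- by [].
- move=> a b ha hb.
  case: (posnP a) => [->|a0] //.
  case: (posnP b) => [->|b0]; first by rewrite addn0.
  move: ha hb; rewrite !E.
  have -> : (a == 0) = false by lia. have -> : (b == 0) = false by lia.
  have -> : (a + b == 0) = false by lia.
  case: (ltnP a m) => // am. case: (ltnP b m) => // bm.
  have -> : (a + b < m) = false by lia.
  case: (ltnP (a + b) (3 * m)) => abm; last first.
    by have -> : (a + b < 2 * m) = false by lia.
  have -> : a < 2 * m by lia. have -> : b < 2 * m by lia.
  move=> Ua Ub.
  have -> : (a + b < 2 * m) = false by lia.
  have := cl (a - m) (b - m) ltac:(lia) Ua Ub.
  by have -> : a - m + (b - m) = a + b - 2 * m by lia.
- by exists (3 * m).
- by exists (3 * m); split.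
have : has (fun n => ~~ nth true (mk m U V) n) (iota 0 (3 * m)) by rewrite has_count hgenus.
case/hasP=> x _ hx.
have exP : exists i, (fun n => ~~ nth true (mk m U V) n) i by exists x.
have ubP : forall i, (fun n => ~~ nth true (mk m U V) n) i -> i <= 3 * m.
  move=> i /= hi; case: (ltnP i (3 * m)) => // hi'; first lia.
  by rewrite cof in hi.
case: (ex_maxnP exP ubP) => f hf fmax.
exists f, m; split.
- split => // n fn; apply/negPn/negP => hn; have := fmax n hn; lia.
- split => //.
    rewrite E; case: ifP => // ?; rewrite ltnn; case: ifP => ?; first by rewrite subnn.
    lia.
  move=> n /andP [n0 nm]; rewrite E; case: ifP => ?; first lia. by rewrite nm.
- case: (ltnP f (3 * m)) => // hf'; by rewrite cof in hf.
Qed.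

Fixpoint comps (n : nat) : seq (seq nat) :=
  match n with
  | 0 => [:: [::]]
  | 1 => [:: [:: 1]]
  | (n'.+1 as p).+1 => map (cons 1) (comps p) ++ map (cons 2) (comps n')
  end.

Definition w12 (w : seq nat) := all (fun p => (p == 1) || (p == 2)) w.

Definition CP n := size (comps n) = fib n.+1 /\ uniq (comps n) /\
   forall w, w \in comps n -> w12 w /\ sumn w = n.

Lemma CP2 n : CP n -> CP n.+1 -> CP n.+2.
Proof.
move=> [s0 [u0 h0]] [s1 [u1 h1]]; rewrite /CP.
have -> : comps n.+2 = map (cons 1) (comps n.+1) ++ map (cons 2) (comps n) by [].
split; first by rewrite size_cat !size_map s1 s0.
split.
  rewrite cat_uniq !map_inj_uniq //; try by move=> x y [].
  rewrite u0 u1 /= andbT; apply/hasP => [[x /mapP [y _ ->] /mapP [z _]]] //.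
move=> w; rewrite mem_cat => /orP [] /mapP [y hy ->].
  by have [a b] := h1 y hy; rewrite /w12 /= b.
by have [a b] := h0 y hy; rewrite /w12 /= b.
Qed.

Lemma comps_prop n : CP n.
Proof.
suff : CP n /\ CP n.+1 by case.
elim: n => [|n [a b]].
  by split; (split; [done| split; [done|]]) => w; rewrite inE => /eqP ->.
by split => //; apply: CP2.
Qed.

Lemma w12_sum w : w12 w -> sumn w = size w + count (fun p => p != 1) w.
Proof.
elim: w => //= a w IH /andP [ha hw]; rewrite IH //.
by case/orP: ha => /eqP ->; lia.
Qed.

Lemma w12_sum2 w : w12 w -> sumn w <= 2 * size w.
Proof.
elim: w => //= a w IH /andP [ha hw]; have := IH hw.
by case/orP: ha => /eqP ->; lia.
Qed.

Definition bit (p : nat) : bool := p == 1.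

Lemma count_bit w : w12 w -> count negb (map bit w) = count (fun p => p != 1) w.
Proof. by rewrite count_map. Qed.

Lemma bit_inj w w' : w12 w -> w12 w' -> map bit w = map bit w' -> w = w'.
Proof.
elim: w w' => [|a w IH] [|b w'] //= /andP [ha hw] /andP [hb hw'] [eab ew].
rewrite (IH w') //; congr cons.
by move: eab; rewrite /bit; case/orP: ha => /eqP ->; case/orP: hb => /eqP ->.
Qed.

Lemma w12_take d w : w12 w -> w12 (take d w).
Proof. by move=> h; rewrite /w12 -(cat_take_drop d w) all_cat in h; case/andP: h. Qed.
Lemma w12_drop d w : w12 w -> w12 (drop d w).
Proof. by move=> h; rewrite /w12 -(cat_take_drop d w) all_cat in h; case/andP: h. Qed.

Definition shaped (s : seq bool) :=
  exists m U V, [/\ 0 < m, size U = m, size V = m, nth false U 0 & s = mk m U V].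

Lemma shaped_eq s s' : shaped s -> shaped s' ->
  (forall n, nth true s n = nth true s' n) -> s = s'.
Proof.
move=> [m [U [V [m0 hU hV U0 ->]]]] [m' [U' [V' [m0' hU' hV' U0' ->]]]] E.
have key : forall a b A B C D, 0 < a -> size A = a -> size B = a ->
   0 < b -> size C = b -> size D = b -> nth false C 0 ->
   (forall n, nth true (mk a A B) n = nth true (mk b C D) n) -> a <= b.
  move=> a b A B C D a0 hA hB b0 hC hD C0 E'.
  case: (leqP a b) => // ba.
  have := E' b; rewrite (nth_mk _ a0 hA hB) (nth_mk _ b0 hC hD).
  have -> : (b == 0) = false by lia. rewrite ba ltnn.
  have -> : b < 2 * b by lia. by rewrite subnn C0.
have mm : m = m'.
  apply/eqP; rewrite eqn_leq (key m m' U V U' V') //=.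
  by apply: (key m' m U' V' U V) => // n; rewrite E.
rewrite -mm in hV' E *; have hU2 : size U' = m by rewrite mm.
apply: (@eq_from_nth _ true); first by rewrite (size_mk m0 hU hV) (size_mk m0 hU2 hV').
by move=> i _; apply: E.
Qed.

Lemma shaped_neq s s' : shaped s -> shaped s' -> s <> s' ->
  exists n, nth true s n != nth true s' n.
Proof.
move=> h h' ne; apply: NNPP => hn; apply: ne; apply: shaped_eq => // n.
apply/eqP; apply: NNPP => hh; apply: hn; exists n; exact/negP.
Qed.

Lemma uniq_flatten_key (I X K : eqType) (F : I -> seq X) (tag : X -> K) (key : I -> K)
  (idx : seq I) : uniq (map key idx) -> (forall i, i \in idx -> uniq (F i)) ->
  (forall i x, i \in idx -> x \in F i -> tag x = key i) -> uniq (flatten (map F idx)).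
Proof.
elim: idx => //= i idx IH /andP [ni ui] hu ht.
rewrite cat_uniq hu ?inE ?eqxx // IH //; last first.
- by move=> j x hj hx; apply: ht => //; rewrite inE hj orbT.
- by move=> j hj; apply: hu; rewrite inE hj orbT.
rewrite andbT; apply/hasP => [[x /flattenP [y /mapP [j hj ->] hx] hxi]].
have e1 := ht i x (mem_head _ _) hxi.
have e2 := ht j x ltac:(by rewrite inE hj orbT) hx.
by move: ni; rewrite -e1 e2 (map_f key hj).
Qed.

Fixpoint fillv (p ys : seq bool) : seq bool :=
  match p with
  | [::] => [::]
  | b :: p' => if b then true :: fillv p' ys else head true ys :: fillv p' (behead ys)
  end.

Lemma size_fillv p ys : size (fillv p ys) = size p.
Proof. by elim: p ys => //= b p IH ys; case: b => /=; rewrite IH. Qed.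

Lemma count_fillv p ys : size ys = count negb p -> count negb (fillv p ys) = count negb ys.
Proof.
elim: p ys => [|b p IH] ys /=; first by case: ys.
case: b => /=; first by move=> h; rewrite IH.
by case: ys => //= y ys [h]; rewrite IH.
Qed.

Lemma nth_fillv p ys i : nth false p i -> nth false (fillv p ys) i.
Proof.
elim: p ys i => [|b p IH] ys [|i] //=; case: b => //= h; exact: IH.
Qed.

Lemma fillv_inj p ys ys' : size ys = count negb p -> size ys' = count negb p ->
  fillv p ys = fillv p ys' -> ys = ys'.
Proof.
elim: p ys ys' => [|b p IH] ys ys' /=.
  by case: ys; case: ys'.
case: b => /=; first by move=> h h' [e]; apply: IH.
case: ys => // y ys; case: ys' => // y' ys' [h] [h'] [e1 e2].
by rewrite e1 (IH ys ys').
Qed.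

Definition inA k (A : {set 'I_k}) (i : nat) : bool := [exists x in A, val x == i].
Definition Abits k (A : {set 'I_k}) := mkseq (inA A) k.
Definition pat k (A : {set 'I_k}) := mkseq (in_sumset A) k.
Definition dd k (A : {set 'I_k}) := count negb (pat A).

Definition fam1 (w : seq nat) : seq bool :=
  mk (size w).+1 (true :: map bit w) (nseq (size w).+1 true).

Definition fam2 k (A : {set 'I_k}) (w : seq nat) : seq bool :=
  mk (k + size (drop (dd A) w)).+1 (Abits A ++ false :: map bit (drop (dd A) w))
     (fillv (pat A) (map bit (take (dd A) w)) ++ false :: nseq (size (drop (dd A) w)) true).

Definition tag (s : seq bool) : nat * seq bool :=
  let m := size s %/ 3 in
  let k := m.-1 - find negb (rev (drop (2 * m) s)) in
  (k, take k (take m (drop m s))).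

Lemma tag_mk m U V : 0 < m -> size U = m -> size V = m ->
  tag (mk m U V) = (m.-1 - find negb (rev V), take (m.-1 - find negb (rev V)) U).
Proof.
move=> m0 hU hV; rewrite /tag (size_mk m0 hU hV) mulKn //.
have e : mk m U V = (true :: nseq m.-1 false) ++ U ++ V by [].
have sp : size (true :: nseq m.-1 false) = m by rewrite /= size_nseq; lia.
have -> : drop (2 * m) (mk m U V) = V.
  by rewrite e catA drop_size_cat // size_cat sp hU; lia.
by rewrite e drop_size_cat // take_size_cat.
Qed.

Lemma find_nseq n : find negb (nseq n true) = n.
Proof. by elim: n => //= n ->. Qed.

Lemma tag_fam1 w : tag (fam1 w) = (0, [::]).
Proof.
rewrite /fam1 tag_mk //=; try by rewrite ?size_map ?size_nseq.
by rewrite -[true :: nseq _ _]/(nseq (size w).+1 true) rev_nseq find_nseq subnS subnn.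
Qed.

Lemma inA_val k (A : {set 'I_k}) (x : 'I_k) : inA A (val x) = (x \in A).
Proof.
apply/existsP/idP => [[y /andP [hy /eqP e]]|hx].
  by rewrite -(val_inj e).
by exists x; rewrite hx eqxx.
Qed.

Lemma count_inA k (A : {set 'I_k}) : count (inA A) (iota 0 k) = #|A|.
Proof.
rewrite -sum1_card [RHS]big_mkcond /= -sum1_count big_mkcond /=.
have -> : iota 0 k = index_iota 0 k by rewrite /index_iota subn0.
rewrite big_mkord; apply: eq_bigr => i _.
by rewrite inA_val.
Qed.

Lemma count_Abits k (A : {set 'I_k}) : count negb (Abits A) = k - #|A|.
Proof.
have := count_predC id (Abits A).
rewrite /Abits size_mkseq /mkseq !count_map count_inA.
have -> : count (preim (inA A) (predC id)) (iota 0 k) = count (preim (inA A) negb) (iota 0 k) by [].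
lia.
Qed.

Lemma card_le k (A : {set 'I_k}) : #|A| <= k.
Proof. by rewrite -count_inA -[X in _ <= X](size_iota 0 k) count_size. Qed.

Lemma size_drop_dd k (A : {set 'I_k}) (w : seq nat) : size (drop (dd A) w) = size w - dd A.
Proof. by rewrite size_drop. Qed.

Lemma size_Abits k (A : {set 'I_k}) : size (Abits A) = k.
Proof. by rewrite size_mkseq. Qed.
Lemma size_pat k (A : {set 'I_k}) : size (pat A) = k.
Proof. by rewrite size_mkseq. Qed.

Section Fam2.
Variables (k : nat) (A : {set 'I_k}) (w : seq nat).
Hypotheses (k0 : 0 < k) (hA : in_Ak A) (hw : w12 w) (hsz : dd A <= size w).

Let n := size (drop (dd A) w).
Let U := Abits A ++ false :: map bit (drop (dd A) w).
Let V := fillv (pat A) (map bit (take (dd A) w)) ++ false :: nseq n true.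

Lemma sizeU : size U = (k + n).+1.
Proof. by rewrite /U size_cat size_Abits /= size_map; lia. Qed.
Lemma sizeV : size V = (k + n).+1.
Proof. by rewrite /V size_cat size_fillv size_pat /= size_nseq; lia. Qed.
Lemma U0 : nth false U 0.
Proof.
rewrite /U nth_cat size_Abits k0 /Abits nth_mkseq //.
by case/andP: hA.
Qed.

Lemma fam2E : fam2 A w = mk (k + n).+1 U V.
Proof. by []. Qed.

Lemma fam2_shaped : shaped (fam2 A w).
Proof. exists (k + n).+1, U, V; split => //; [exact: sizeU|exact: sizeV|exact: U0]. Qed.

Lemma tag_fam2 : tag (fam2 A w) = (k, Abits A).
Proof.
rewrite fam2E tag_mk //; [|exact: sizeU|exact: sizeV].
have -> : find negb (rev V) = n.
  rewrite /V rev_cat rev_cons rev_nseq -cats1 -catA find_cat has_nseq /=.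
  by rewrite size_nseq andbF addn0.
have -> : (k + n).+1.-1 - n = k by lia.
by rewrite /U take_size_cat // size_Abits.
Qed.

Lemma nthU i : nth false U i =
  if i < k then inA A i else if i == k then false else nth false (map bit (drop (dd A) w)) (i - k).-1.
Proof.
rewrite /U nth_cat size_Abits; case: ifP => h1; first by rewrite /Abits nth_mkseq.
case: ifP => h2; first by rewrite (eqP h2) subnn.
have -> : i - k = (i - k).-1.+1 by lia.
by [].
Qed.

Lemma nthV i : i < (k + n).+1 -> k < i -> nth false V i.
Proof.
move=> h1 h2; rewrite /V nth_cat size_fillv size_pat.
have -> : (i < k) = false by lia.
have -> : i - k = (i - k).-1.+1 by lia.
by rewrite /= nth_nseq; case: ifP => //; lia.
Qed.

Lemma nthV2 i : i < k -> in_sumset A i -> nth false V i.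
Proof.
move=> h1 h2; rewrite /V nth_cat size_fillv size_pat h1.
by apply: nth_fillv; rewrite /pat nth_mkseq.
Qed.

Lemma fam2_counted g :
  k + n + (k - #|A|) + 2 + count (fun p => p != 1) w = g -> 0 < g ->
  counted_sg g (nth true (fam2 A w)).
Proof.
move=> hg g0; rewrite fam2E; apply: counted_of => //; try lia.
- exact: sizeU.
- exact: sizeV.
- exact: U0.
- move=> i j hij; rewrite !nthU.
  case: (ltnP k (i + j)) => hk; first by move=> _ _; apply: nthV.
  case: (ltnP i k) => hi; last first.
    have -> : i = k by lia. by rewrite ?ltnn eqxx.
  case: (ltnP j k) => hj; last first.
    have -> : j = k by lia. by rewrite ?ltnn eqxx.
  case/existsP => x /andP [xA /eqP xi]; case/existsP => y /andP [yA /eqP yj].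
  have hs : in_sumset A (i + j).
    apply/existsP; exists x; rewrite xA /=; apply/existsP; exists y; rewrite yA /=. by rewrite xi yj.
  case: (ltnP (i + j) k) => h; first exact: nthV2.
  have e : i + j = k by lia.
  have hs2 : in_sumset A k by move: hs; rewrite e. by case/andP: hA => _; rewrite hs2.
- rewrite /U /V !count_cat count_Abits /= count_nseq /= mul0n addn0.
  rewrite count_fillv; last by rewrite size_map size_take -/(dd A); case: ifP => // h; lia.
  rewrite !count_bit; [|exact: w12_take|exact: w12_drop].
  have ec : count (fun p => p != 1) w = count (fun p => p != 1) (take (dd A) w) + count (fun p => p != 1) (drop (dd A) w) by rewrite -count_cat cat_take_drop.
  rewrite -hg ec. set a := count _ (take _ _). set b := count _ (drop _ _). set c := k - #|A|. clearbody n. lia.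
Qed.

End Fam2.

Lemma mk_inj m m' U V U' V' : 0 < m -> size U = m -> size V = m ->
  0 < m' -> size U' = m' -> size V' = m' -> mk m U V = mk m' U' V' ->
  [/\ m = m', U = U' & V = V'].
Proof.
move=> m0 hU hV m0' hU' hV' e.
have hs := congr1 size e; rewrite (size_mk m0 hU hV) (size_mk m0' hU' hV') in hs.
have mm : m = m' by lia.
have e1 : nseq m.-1 false ++ U ++ V = nseq m'.-1 false ++ U' ++ V' by case: e.
rewrite -mm in hU' hV' e1.
have /eqP := e1; rewrite eqseq_cat ?size_nseq // => /andP [_ /eqP e2].
have /eqP := e2; rewrite eqseq_cat ?hU ?hU' // => /andP [/eqP e3 /eqP e4].
by split.
Qed.

Lemma fam2_inj k (A : {set 'I_k}) w w' : w12 w -> dd A <= size w ->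
   w12 w' -> dd A <= size w' -> fam2 A w = fam2 A w' -> w = w'.
Proof.
move=> hw hsz hw' hsz' e.
have := mk_inj _ _ _ _ _ _ e.
rewrite !size_cat !size_Abits /= !size_map !size_fillv !size_pat /= !size_nseq.
case=> //; try lia.
move=> mm; have nn : size (drop (dd A) w) = size (drop (dd A) w') by lia.
move=> /eqP; rewrite eqseq_cat ?size_Abits // => /andP [_ /eqP [ed]].
move=> /eqP; rewrite eqseq_cat ?size_fillv // => /andP [/eqP ef _].
have ed' := bit_inj (w12_drop _ hw) (w12_drop _ hw') ed.
have et : map bit (take (dd A) w) = map bit (take (dd A) w').
  apply: (fillv_inj _ _ ef); rewrite size_map size_take -/(dd A); case: ifP => // h; lia.
have et' := bit_inj (w12_take _ hw) (w12_take _ hw') et.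
by rewrite -(cat_take_drop (dd A) w) et' ed' cat_take_drop.
Qed.

Lemma fam1_shaped w : shaped (fam1 w).
Proof. by exists (size w).+1, (true :: map bit w), (nseq (size w).+1 true); split; rewrite //= ?size_map ?size_nseq. Qed.

Lemma fam1_counted w g : w12 w -> sumn w = g -> 0 < g -> counted_sg g (nth true (fam1 w)).
Proof.
move=> hw hs g0.
have sw : 0 < size w by case: w hs hw => //= ? ; lia.
apply: counted_of => //; rewrite /= ?size_map ?size_nseq //; try lia.
  move=> i j hij _ _; case: (i + j) hij => //= n hn; rewrite nth_nseq; case: ifP => //; lia.
rewrite count_nseq /= mul0n addn0 count_bit // -hs (w12_sum hw); lia.
Qed.

Lemma fam1_inj w w' : fam1 w = fam1 w' -> w12 w -> w12 w' -> w = w'.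
Proof.
move=> e hw hw'; have := mk_inj _ _ _ _ _ _ e; rewrite /= ?size_map ?size_nseq.
by case=> // _ [e2] _; apply: bit_inj.
Qed.

Lemma Abits_inj k : injective (@Abits k).
Proof.
move=> A A' e; apply/setP => x.
have := congr1 (fun s => nth false s (val x)) e; rewrite /= /Abits !nth_mkseq //.
by rewrite !inA_val.
Qed.

Lemma size_flatten_map (I X : Type) (F : I -> seq X) (l : seq I) :
  size (flatten (map F l)) = \sum_(i <- l) size (F i).
Proof. by elim: l => [|i l IH]; rewrite ?big_nil ?big_cons //= size_cat IH. Qed.

Definition NN g k (A : {set 'I_k}) := g + #|A| - 2 * k - 2 + dd A.
Definition Bk g k (A : {set 'I_k}) := map (fam2 A) (comps (NN g A)).
Definition Sk k := [seq A <- index_enum {set 'I_k} | in_Ak A].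
Definition S2 g := flatten [seq flatten [seq Bk g A | A <- Sk k] | k <- index_iota 1 (g %/ 3).+1].

Lemma dd_le k (A : {set 'I_k}) : 0 < k -> in_Ak A -> dd A <= k.-1.
Proof.
move=> k0 hA.
have h0 : in_sumset A 0.
  case/andP: hA => /existsP [x /andP [xA /eqP x0]] _.
  by apply/existsP; exists x; rewrite xA /=; apply/existsP; exists x; rewrite xA x0.
have : 0 < count id (pat A).
  rewrite -has_count; apply/hasP; exists (nth false (pat A) 0).
    by apply: mem_nth; rewrite size_pat.
  by rewrite /pat nth_mkseq.
have := count_predC id (pat A); rewrite size_pat /dd.
have -> : count (predC id) (pat A) = count negb (pat A) by []. lia.
Qed.

Lemma S2_mem g x : 0 < g -> x \in S2 g ->
  exists k (A : {set 'I_k}) w, [/\ 0 < k, 3 * k <= g, in_Ak A, w \in comps (NN g A) & x = fam2 A w].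
Proof.
move=> g0 /flattenP [y /mapP [k hk ->]] /flattenP [z /mapP [A hA ->]] /mapP [w hw ->].
move: hk; rewrite mem_index_iota => /andP [k1 k2].
move: hA; rewrite mem_filter => /andP [hA _].
exists k, A, w; split => //.
lia.
Qed.

Lemma fam2_ok g k (A : {set 'I_k}) (w : seq nat) : 0 < g -> 0 < k -> 3 * k <= g -> in_Ak A ->
  w \in comps (NN g A) -> counted_sg g (nth true (fam2 A w)) /\ dd A <= size w.
Proof.
move=> g0 k0 kg hA hw.
have [hw12 hs] := (comps_prop (NN g A)).2.2 w hw.
have hd : dd A < k by have := dd_le k0 hA; have := k0; generalize (dd A); case: (k) => // k1.
have hc := card_le A.
have hA1 : 0 < #|A|.
  case/andP: hA => /existsP [x /andP [xA _]] _; apply/card_gt0P; by exists x.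
have h2 := w12_sum2 hw12.
have h1 := w12_sum hw12.
have hsz : dd A <= size w by move: hs; rewrite /NN; lia.
split => //.
apply: fam2_counted => //.
rewrite size_drop.
move: hs; rewrite /NN; lia.
Qed.

Lemma S_ok g x : 0 < g -> x \in map fam1 (comps g) ++ S2 g ->
  counted_sg g (nth true x) /\ shaped x.
Proof.
move=> g0; rewrite mem_cat => /orP [/mapP [w hw ->]|hx].
  have [hw12 hs] := (comps_prop g).2.2 w hw.
  by split; [apply: fam1_counted|apply: fam1_shaped].
have [k [A [w [k0 kg hA hw ->]]]] := S2_mem g0 hx.
have [h1 h2] := fam2_ok g0 k0 kg hA hw.
have [hw12 _] := (comps_prop _).2.2 w hw.
by split => //; apply: fam2_shaped.
Qed.

Lemma S_uniq g : 0 < g -> uniq (map fam1 (comps g) ++ S2 g).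
Proof.
move=> g0; rewrite cat_uniq; apply/and3P; split.
- rewrite map_inj_in_uniq; first by have [_ [u _]] := comps_prop g.
  move=> w w' hw hw' e; apply: fam1_inj => //.
  + by have [] := (comps_prop g).2.2 w hw.
  + by have [] := (comps_prop g).2.2 w' hw'.
- apply/hasP => [[x hx /mapP [w _ e]]].
  have [k [A [w' [k0 kg hA hw e2]]]] := S2_mem g0 hx.
  have [hw12 _] := (comps_prop _).2.2 w' hw.
  have [_ hsz] := fam2_ok g0 k0 kg hA hw.
  have := congr1 tag e; rewrite e2 in e *; rewrite tag_fam1 (tag_fam2 k0 hA hw12 hsz) => -[k00].
  by rewrite k00 in k0.
- rewrite /S2.
  apply: (@uniq_flatten_key _ _ _ _ (fun x => (tag x).1) id).
  + by rewrite map_id iota_uniq.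
  + move=> k hk; move: hk; rewrite mem_index_iota => /andP [k1 k2].
    have kg : 3 * k <= g by lia.
    apply: (@uniq_flatten_key _ _ _ _ (fun x => (tag x).2) (@Abits k)).
    * rewrite map_inj_uniq; last exact: Abits_inj.
      by rewrite filter_uniq // index_enum_uniq.
    * move=> A; rewrite mem_filter => /andP [hA _].
      rewrite map_inj_in_uniq; first by have [_ [u _]] := comps_prop (NN g A).
      move=> w w' hw hw' e.
      have [hw12 _] := (comps_prop _).2.2 w hw.
      have [hw12' _] := (comps_prop _).2.2 w' hw'.
      have [_ hsz] := fam2_ok g0 k1 kg hA hw.
      have [_ hsz'] := fam2_ok g0 k1 kg hA hw'.
      exact: fam2_inj e.
    * move=> A x; rewrite mem_filter => /andP [hA _] /mapP [w hw ->].
      have [hw12 _] := (comps_prop _).2.2 w hw.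
      have [_ hsz] := fam2_ok g0 k1 kg hA hw.
      by rewrite (tag_fam2 k1 hA hw12 hsz).
  + move=> k x hk; move: (hk); rewrite mem_index_iota => /andP [k1 k2].
    have kg : 3 * k <= g by lia.
    move=> /flattenP [y /mapP [A hA ->]] /mapP [w hw ->].
    move: hA; rewrite mem_filter => /andP [hA _].
    have [hw12 _] := (comps_prop _).2.2 w hw.
    have [_ hsz] := fam2_ok g0 k1 kg hA hw.
    by rewrite (tag_fam2 k1 hA hw12 hsz).
Qed.

Lemma sumset_dd k (A : {set 'I_k}) : in_Ak A -> sumset_card_upto A + dd A = k.
Proof.
case/andP => _ hk.
rewrite /sumset_card_upto -addn1 iotaD count_cat /= (negbTE hk) addn0.
have := count_predC id (pat A); rewrite size_pat /dd.
have -> : count (predC id) (pat A) = count negb (pat A) by [].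
rewrite /pat /mkseq count_map addn0; apply.
Qed.

Lemma fib_term g k (A : {set 'I_k}) : 0 < k -> 3 * k <= g -> in_Ak A ->
  fibz (g%:Z - (sumset_card_upto A)%:Z + #|A|%:Z - k%:Z - 1)%R = size (Bk g A).
Proof.
move=> k0 kg hA.
rewrite /Bk size_map (comps_prop _).1.
have hd : dd A < k by have := dd_le k0 hA; have := k0; generalize (dd A); case: (k) => // k1.
have hc := card_le A.
have hA1 : 0 < #|A|.
  case/andP: hA => /existsP [x /andP [xA _]] _; apply/card_gt0P; by exists x.
have hs := sumset_dd hA.
have -> : (g%:Z - (sumset_card_upto A)%:Z + #|A|%:Z - k%:Z - 1)%R = Posz (NN g A).+1.
  rewrite /NN; lia.
by [].
Qed.

Lemma S_size g : 0 < g -> rhs g <= size (map fam1 (comps g) ++ S2 g).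
Proof.
move=> g0; rewrite size_cat size_map (comps_prop g).1 /rhs leq_add2l.
rewrite /S2 size_flatten_map big_seq [X in _ <= X]big_seq; apply: leq_sum => k hk.
move: hk; rewrite mem_index_iota => /andP [k1 k2].
have kg : 3 * k <= g by lia.
rewrite size_flatten_map /Sk big_filter; apply: leq_sum => A hA.
by rewrite fib_term.
Qed.

Theorem lemma3p6 (g : nat) (hg : 0 < g) :
  exists s : seq (pred nat),
    [/\ rhs g <= size s,
        (forall i, i < size s -> counted_sg g (nth (fun _ : nat => false) s i)) &
        (forall i j, i < size s -> j < size s -> i <> j ->
           exists n, nth (fun _ : nat => false) s i n != nth (fun _ : nat => false) s j n)].
Proof.
set S := map fam1 (comps g) ++ S2 g.
exists (map (fun s : seq bool => (nth true s : pred nat)) S); rewrite size_map; split.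
- exact: S_size.
- move=> i hi; rewrite (nth_map [::]) //.
  by have [] := S_ok hg (mem_nth [::] hi).
- move=> i j hi hj ne; rewrite !(nth_map [::]) //.
  apply: shaped_neq.
  + by have [] := S_ok hg (mem_nth [::] hi).
  + by have [] := S_ok hg (mem_nth [::] hj).
  + move=> /eqP; rewrite nth_uniq //; last exact: S_uniq.
    by move/eqP.
Qed.
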